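(* Let $G$ be a graph and let $H=(v_1,v_2,C)$ be an induced subdivision of the $2$-pan in $G$ having the minimum number of vertices among all induced subdivisions of the $2$-pan in $G$, where $C$ is the cycle of $H$, $v_1$ is the vertex of degree $1$, and $v_2$ is the vertex of degree $2$ not on $C$. If $|V(C)|\ge 11$, then every vertex $v\in V(G)\setminus V(H)$ either has at most one neighbor in $V(C)$ or is adjacent to every vertex of $C$.
   Context: All graphs are finite and simple. An induced subdivision of a graph $F$ in $G$ is an induced subgraph of $G$ isomorphic to a graph obtained from $F$ by repeatedly replacing edges by paths of length $2$ through new vertices. The $2$-pan is the graph obtained from the disjoint union of a triangle and a path with $2$ edges by identifying one endpoint of the path with a vertex of the triangle; an induced subdivision of it consists of an induced cycle $C$ and an induced path $v_1v_2$ such that $v_2$ has exactly one neighbor on $C$ and $v_1$ has none. *)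

(* Defs.v *)
(* A simple graph on a finite vertex type T is a symmetric,
   irreflexive boolean relation e : rel T. *)
From mathcomp Require Import all_boot.
Set Implicit Arguments. Unset Strict Implicit. Unset Printing Implicit Defensive.

Definition cyc_adj (n i j : nat) : bool :=
  (j == i.+1 %% n) || (i == j.+1 %% n).

Definition induced_cycle (T : finType) (e : rel T) (c : seq T) : Prop :=
  [/\ uniq c, 3 <= size c &
      forall (x0 : T) (i j : nat), i < size c -> j < size c ->
        e (nth x0 c i) (nth x0 c j) = cyc_adj (size c) i j].

Definition induced_2pan (T : finType) (e : rel T) (v1 v2 : T) (c : seq T) : Prop :=
  [/\ induced_cycle e c, (v1 \notin c) && (v2 \notin c), e v1 v2,
      count (e v2) c = 1 & ~~ has (e v1) c].

Definition pan_order (T : finType) (c : seq T) : nat := (size c).+2.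

(* Main.v *)
Require Import Defs.
From mathcomp Require Import all_boot zify.
Set Implicit Arguments. Unset Strict Implicit. Unset Printing Implicit Defensive.


Definition posn (T : Type) (x0 : T) (C : seq T) (i : nat) := nth x0 C (i %% size C).

Lemma posn_per (T : Type) (x0 : T) (C : seq T) i : posn x0 C (i + size C) = posn x0 C i.
Proof. by rewrite /posn modnDr. Qed.

Lemma cycE m i j : i < m -> j < m ->
  cyc_adj m i j = [|| j == i.+1, i == j.+1, (i.+1 == m) && (j == 0) | (j.+1 == m) && (i == 0)].
Proof.
move=> im jm; rewrite /cyc_adj.
have H k : k < m -> k.+1 %% m = if k.+1 == m then 0 else k.+1.
  move=> km; case: eqP => [->|ne]; first by rewrite modnn.
  by rewrite modn_small //; lia.
rewrite (H i im) (H j jm).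
case: (i.+1 =P m) => [hi|hi]; case: (j.+1 =P m) => [hj|hj] /=; lia.
Qed.

Lemma adjA (T : finType) (e : rel T) (C : seq T) x0 (HC : induced_cycle e C) a i j :
  i.+1 < size C -> j.+1 < size C ->
  e (posn x0 C (a+i)) (posn x0 C (a+j)) = (j == i.+1) || (i == j.+1).
Proof.
case: HC => _ s3 Hadj im jm.
have n0 : 0 < size C by lia.
rewrite /posn Hadj ?ltn_pmod // /cyc_adj.
have E k : (((a + k) %% size C).+1 %% size C) = (a + k.+1) %% size C.
  by rewrite -addn1 modnDml addn1 addnS.
rewrite !E !eqn_modDl !modn_small //; lia.
Qed.

Lemma posn_in (T : eqType) (x0 : T) (C : seq T) i : 0 < size C -> posn x0 C i \in C.
Proof. by move=> h; rewrite /posn mem_nth // ltn_pmod. Qed.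

Lemma posn_inj (T : eqType) (x0 : T) (C : seq T) a i j : uniq C ->
  i < size C -> j < size C -> (posn x0 C (a+i) == posn x0 C (a+j)) = (i == j).
Proof.
move=> u im jm; have n0 : 0 < size C by lia.
rewrite /posn nth_uniq ?ltn_pmod // eqn_modDl !modn_small //.
Qed.


Definition carc (T : Type) (x0 : T) (C : seq T) a d :=
  mkseq (fun i => posn x0 C (a + i)) d.+1.

Lemma arc_cycle (T : finType) (e : rel T) (e_sym : symmetric e) (e_irr : irreflexive e)
  (C : seq T) x0 (HC : induced_cycle e C) v (vC : v \notin C) a d :
  0 < d -> d.+2 < size C ->
  e v (posn x0 C a) -> e v (posn x0 C (a + d)) ->
  (forall i, 0 < i < d -> ~~ e v (posn x0 C (a + i))) ->
  induced_cycle e (v :: carc x0 C a d).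
Proof.
move=> d0 dn ea ed ei.
have HC' := HC; case: HC' => uC s3 _.
have n0 : 0 < size C by lia.
split.
- rewrite cons_uniq /carc /mkseq; apply/andP; split.
    apply/negP => /mapP [i _ Hv]; by rewrite Hv posn_in in vC.
  have dn' : d.+1 <= size C by apply: ltnW; apply: ltnW.
  rewrite map_inj_in_uniq ?iota_uniq // => i j; rewrite !mem_iota !add0n => /andP[_ hi] /andP[_ hj] /eqP.
  by rewrite posn_inj //; [move/eqP | apply: leq_trans hi dn' | apply: leq_trans hj dn'].
- by rewrite /carc /mkseq /= size_map size_iota; lia.
move=> y0 i j; rewrite (_ : size (v :: carc x0 C a d) = d.+2); last by rewrite /carc /mkseq /= size_map size_iota.
move=> hi hj.
rewrite cycE //.
case: i hi => [|i] hi; case: j hj => [|j] hj /=.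
- by rewrite e_irr; lia.
- rewrite /carc nth_mkseq; last lia.
  have [->|j0] := eqVneq j 0; first by rewrite addn0 ea.
  have [->|jd] := eqVneq j d; first by rewrite ed; lia.
  rewrite (negbTE (ei j _)); lia.
- rewrite /carc nth_mkseq; last lia. rewrite e_sym.
  have [->|i0] := eqVneq i 0; first by rewrite addn0 ea.
  have [->|id] := eqVneq i d; first by rewrite ed; lia.
  rewrite (negbTE (ei i _)); lia.
- rewrite /carc !nth_mkseq; try lia.
  rewrite adjA //; lia.
Qed.


Ltac nlia := match goal with Hn : size _ = _ |- _ => rewrite ?Hn; lia end.

Lemma notin_arc (T : finType) (C : seq T) (x0 : T) (uC : uniq C) v (vC : v \notin C) a d k :
  d < k -> k < size C -> posn x0 C (a + k) \notin v :: carc x0 C a d.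
Proof.
move=> dk kn; have n0 : 0 < size C by lia.
rewrite in_cons negb_or; apply/andP; split.
  apply/eqP => Hx; by rewrite -Hx posn_in in vC.
apply/negP => /mapP [i0]; have [i ->] : exists i : nat, i0 = i by exists i0.
rewrite mem_iota add0n => /andP[_ hi] /eqP.
rewrite posn_inj //; clear i0; [move/eqP => E; subst; lia | exact: leq_trans hi (ltn_trans dk kn)].
Qed.

Lemma pan_contra (T : finType) (e : rel T) (e_sym : symmetric e) (e_irr : irreflexive e)
  (C : seq T) (x0 : T) (HC : induced_cycle e C) v (vC : v \notin C)
  (Hmin : forall (w1 w2 : T) (C' : seq T), induced_2pan e w1 w2 C' ->
            pan_order C <= pan_order C') a d s t :
  0 < d -> d.+2 <= t -> t.+2 <= size C -> d < s -> s.+2 <= size C ->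
  (t == s.+1) || (s == t.+1) ->
  e v (posn x0 C a) -> e v (posn x0 C (a + d)) ->
  (forall i, 0 < i < d -> ~~ e v (posn x0 C (a + i))) ->
  ~~ e v (posn x0 C (a + t)) -> e v (posn x0 C (a + s)) + (s == d.+1) = 1 -> False.
Proof.
move=> d0 dt tn ds sn ts ea ed ei et es.
have HC' := HC; case: HC' => uC s3 _.
have [n Hn] : exists n, size C = n by eexists.
rewrite Hn in tn sn s3.
have dn : d.+2 < size C by nlia.
have Hcyc := arc_cycle e_sym e_irr HC vC d0 dn ea ed ei.
have Hsz : size (v :: carc x0 C a d) = d.+2 by rewrite /carc /mkseq /= size_map size_iota.
suff Hp : induced_2pan e (posn x0 C (a + t)) (posn x0 C (a + s)) (v :: carc x0 C a d).
  move: (Hmin _ _ _ Hp); rewrite /pan_order Hsz; nlia.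
split => //.
- rewrite !notin_arc //; nlia.
- rewrite (adjA x0 HC); [by rewrite orbC | nlia | nlia].
- change (e (posn x0 C (a+s)) v + count (e (posn x0 C (a + s))) (carc x0 C a d) = 1); rewrite e_sym.
  have -> : count (e (posn x0 C (a + s))) (carc x0 C a d) = (s == d.+1).
    rewrite /carc /mkseq count_map.
    rewrite (@eq_in_count _ _ (pred1 s.-1)); last first.
      move=> i0; have [i ->] : exists i : nat, i0 = i by exists i0.
      rewrite mem_iota add0n => /andP[_ hi] /=.
      rewrite (adjA x0 HC); try nlia.
    rewrite count_uniq_mem ?iota_uniq // mem_iota add0n.
    nlia.
  exact: es.
- change (~~ (e (posn x0 C (a + t)) v || has (e (posn x0 C (a + t))) (carc x0 C a d))).
  rewrite e_sym (negbTE et) orFb /carc /mkseq has_map.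
  apply/hasPn => i0; have [i ->] : exists i : nat, i0 = i by exists i0.
  rewrite mem_iota add0n => /andP[_ hi] /=.
  rewrite (adjA x0 HC); nlia.
Qed.


Definition Nv (T : finType) (e : rel T) (v : T) (C : seq T) i := e v (posn v C i).

Lemma posn_modl (T : Type) (x0 : T) (C : seq T) a k :
  posn x0 C (a %% size C + k) = posn x0 C (a + k).
Proof. by rewrite /posn modnDml. Qed.

Ltac clia := repeat match goal with
  | H : is_true (Nv _ _ _ _) |- _ => clear H
  | H : is_true (~~ (Nv _ _ _ _)) |- _ => clear H
  | H : Nv _ _ _ _ = _ |- _ => clear H
  | H : forall _, _ |- _ => clear H
  end; lia.
Ltac alia := match goal with |- is_true (leq _ _) => clia | |- is_true (orb (eq_op _ _) (eq_op _ _)) => clia end.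

Lemma core (T : finType) (e : rel T) (e_sym : symmetric e) (e_irr : irreflexive e)
  (C : seq T) (Hcyc : induced_cycle e C) v (vC : v \notin C)
  (Hmin : forall (w1 w2 : T) (C' : seq T), induced_2pan e w1 w2 C' ->
            pan_order C <= pan_order C')
  n (Hn : size C = n) (HC : 10 < n) lo hi (lohi : lo < hi) (hin : hi < n)
  (Nlo : Nv e v C lo) (Nhi : Nv e v C hi) z (zn : z < n) (Nz : ~~ Nv e v C z) : False.
Proof.
have n0 : 0 < size C by rewrite Hn; clia.
have pc a d s t : 0 < d -> d.+2 <= t -> t.+2 <= n -> d < s -> s.+2 <= n ->
  (t == s.+1) || (s == t.+1) -> Nv e v C a -> Nv e v C (a + d) ->
  (forall i, 0 < i < d -> ~~ Nv e v C (a + i)) ->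
  ~~ Nv e v C (a + t) -> Nv e v C (a + s) + (s == d.+1) = 1 -> False.
  by rewrite -Hn; exact: (@pan_contra _ _ e_sym e_irr C v Hcyc v vC Hmin a d s t).
have QP a k : 0 < k -> Nv e v C a -> Nv e v C (a + k) ->
    (0 < k) && [exists a : 'I_(size C), Nv e v C a && Nv e v C (a + k)].
  move=> k0 Na Nak; rewrite k0 /=; apply/existsP.
  exists (Ordinal (ltn_pmod a n0)) => /=.
  have E1 : Nv e v C (a %% size C) = Nv e v C a by rewrite /Nv -[a %% size C]addn0 posn_modl addn0.
  have E2 : Nv e v C (a %% size C + k) = Nv e v C (a + k) by rewrite /Nv posn_modl.
  by rewrite E1 E2 Na Nak.
have Nper i : Nv e v C (i + n) = Nv e v C i by rewrite /Nv -Hn posn_per.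
have hl0 : 0 < hi - lo by rewrite subn_gt0.
have hl : lo + (hi - lo) = hi by rewrite subnKC // ltnW.
have Qex : exists k, (0 < k) && [exists a : 'I_(size C), Nv e v C a && Nv e v C (a + k)].
  by exists (hi - lo); apply: (QP lo) => //; rewrite hl.
case: (ex_minnP Qex) => d /andP[d0 /existsP [[a an] /= /andP[Na Nad]]] dmin.
rewrite Hn in an.
have d1 : d <= hi - lo by apply: dmin; apply: (QP lo) => //; rewrite hl.
have d2 : d <= n - (hi - lo).
  apply: dmin; apply: (QP hi) => //; first clia.
  by rewrite (_ : hi + (n - (hi - lo)) = lo + n); [rewrite Nper | clia].
have mini b k : 0 < k < d -> Nv e v C b -> ~~ Nv e v C (b + k).
  move=> /andP[k0 kd] Nb; apply/negP => Nbk.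
  by have := dmin k (QP b k k0 Nb Nbk); rewrite leqNgt kd.
have interior i : 0 < i < d -> ~~ Nv e v C (a + i) by move=> hi'; exact: mini.
have dn : d.*2 <= n by clia.
clear d1 d2 dmin QP Qex.
have [d2|d1] := leqP 2 d.
  have h1 : ~~ Nv e v C (a + d.+1).
    have := mini (a + d) 1 _ Nad; rewrite -addnA addn1; apply; clia.
  case N2: (Nv e v C (a + d.+2)).
    have h3 : ~~ Nv e v C (a + d.+3).
      have := mini (a + d.+2) 1 _ N2; rewrite -addnA addn1; apply; clia.
    apply: (pc a d d.+2 d.+3) => //; try alia; try (by move=> ? /andP[? ?]; exfalso; clia).
    all: try by rewrite N2; clia.
  apply: (pc a d d.+1 d.+2) => //; try alia; try (by move=> ? /andP[? ?]; exfalso; clia).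
  all: try by rewrite N2.
  all: try by rewrite (negbTE h1) eqxx.
have {d0} d1' : d = 1 by clia.
subst d; clear d1 mini.
have int1 : forall i, 0 < i < 1 -> ~~ Nv e v C (a + i) by move=> i; clia.
case B: [exists i : 'I_n, (3 <= i <= n - 3) && (Nv e v C (a + i) != Nv e v C (a + i.+1))].
  case/existsP: B => [[i ilt]] /= /andP[irange neq].
  case Ni: (Nv e v C (a + i)).
    apply: (pc a 1 i i.+1) => //; try alia; try (by move=> ? /andP[? ?]; exfalso; clia).
    all: try by move: neq; rewrite Ni; case: (Nv e v C (a + i.+1)).
    all: try by rewrite Ni; clia.
  have Ni1 : Nv e v C (a + i.+1) by move: neq; rewrite Ni; case: (Nv e v C (a + i.+1)).
  apply: (pc a 1 i.+1 i) => //; try alia; try (by move=> ? /andP[? ?]; exfalso; clia).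
  all: try by rewrite Ni.
  all: try by rewrite Ni1; clia.
move/negbT/existsPn: B => B.
have const0 j : 3 + j <= n - 2 -> Nv e v C (a + (3 + j)) = Nv e v C (a + 3).
  elim: j => [|j IH] hj; first by rewrite addn0.
  have jn : 3 + j < n by clia.
  have := B (Ordinal jn); rewrite /= => /nandP [h|]; first by exfalso; move/negP: h; clia.
  rewrite negbK => /eqP E.
  have -> : 3 + j.+1 = (3 + j).+1 by rewrite addnS.
  rewrite -E IH //; clia.
have const i : 3 <= i <= n - 2 -> Nv e v C (a + i) = Nv e v C (a + 3).
  move=> hi'; rewrite (_ : i = 3 + (i - 3)); last clia.
  apply: const0; clia.
clear B const0.
have N4 : Nv e v C (a + 4) = Nv e v C (a + 3) by apply: const; clia.
case K: (Nv e v C (a + 3)).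
  have N5 : Nv e v C (a + 5) = Nv e v C (a + 3) by apply: const; clia.
  case N2: (Nv e v C (a + 2)).
    case Nl: (Nv e v C (a + (n - 1))).
      have all i : i < n -> Nv e v C (a + i).
        case: i => [|[|[|i]]] hi'; [by rewrite addn0 | done | done |].
        have [->|il] := eqVneq i.+3 (n - 1); first done.
        rewrite const ?K //; clear -hi' il; lia.
      move/negP: Nz; apply.
      have [az|za] := leqP a z.
        have h1 : z - a < n by clear -zn; lia.
        by rewrite -(subnKC az) all.
      have h1 : z + n - a < n by clear -za zn an; lia.
      have h2 : a + (z + n - a) = z + n by clear -za an; lia.
      by rewrite -Nper -h2 all.
    apply: (pc (a + 3) 1 (n - 5) (n - 4)) => //; try alia; try (by move=> ? /andP[? ?]; exfalso; clia).
    - by rewrite -addnA /= N4 K.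
    - by rewrite -addnA (_ : 3 + (n - 4) = n - 1) ?Nl //; clia.
    - rewrite -addnA (_ : 3 + (n - 5) = n - 2); last clia.
      rewrite const ?K; clia.
  apply: (pc (a + 4) 1 (n - 3) (n - 2)) => //; try alia; try (by move=> ? /andP[? ?]; exfalso; clia).
  - by rewrite N4 K.
  - by rewrite -addnA /= N5 K.
  - by rewrite (_ : a + 4 + (n - 2) = a + 2 + n) ?Nper ?N2 //; clia.
  - rewrite (_ : a + 4 + (n - 3) = a + 1 + n) ?Nper ?Nad; clia.
case N2: (Nv e v C (a + 2)).
  apply: (pc (a + 1) 1 2 3) => //; try alia; try (by move=> ? /andP[? ?]; exfalso; clia).
  - by rewrite -addnA.
  - by rewrite -addnA /= N4 K.
  - by rewrite -addnA /= K.
apply: (pc a 1 2 3) => //; try alia; try (by move=> ? /andP[? ?]; exfalso; clia).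
- by rewrite K.
- by rewrite N2.
Qed.


Unset Implicit Arguments.
Theorem mainTheorem14 (T : finType) (e : rel T)
  (e_sym : symmetric e) (e_irr : irreflexive e)
  (v1 v2 : T) (C : seq T)
  (H : induced_2pan e v1 v2 C)
  (Hmin : forall (w1 w2 : T) (C' : seq T), induced_2pan e w1 w2 C' ->
            pan_order C <= pan_order C')
  (HC : 11 <= size C) :
  forall v : T, v \notin C -> v != v1 -> v != v2 ->
    count (e v) C <= 1 \/ all (e v) C.
Proof.
move=> v vC _ _.
case: (leqP (count (e v) C) 1) => [hc|hc]; first by left.
right; case Hall: (all (e v) C) => //; exfalso.
case: H => Hcyc _ _ _ _.
have Hcyc' := Hcyc; case: Hcyc' => uC _ _.
have [n Hn] : exists n, size C = n by eexists.
have HC' : 10 < n by rewrite -Hn.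
have : 1 < size [seq x <- C | e v x] by rewrite size_filter.
have uF := filter_uniq (e v) uC.
case E: [seq x <- C | e v x] uF => [|y1 [|y2 r]] //= uF _.
have y1F : y1 \in [seq x <- C | e v x] by rewrite E inE eqxx.
have y2F : y2 \in [seq x <- C | e v x] by rewrite E !inE eqxx orbT.
rewrite mem_filter in y1F; rewrite mem_filter in y2F.
case/andP: y1F => ey1 y1C; case/andP: y2F => ey2 y2C.
have ne12 : y1 != y2 by move: uF; rewrite inE negb_or => /andP[/andP[]].
have i1n : index y1 C < n by rewrite -Hn index_mem.
have i2n : index y2 C < n by rewrite -Hn index_mem.
have N1 : Nv e v C (index y1 C) by rewrite /Nv /posn modn_small ?nth_index // Hn.
have N2 : Nv e v C (index y2 C) by rewrite /Nv /posn modn_small ?nth_index // Hn.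
have i12 : index y1 C != index y2 C.
  by apply: contra ne12 => /eqP h; rewrite -(nth_index v y1C) -(nth_index v y2C) h.
move/negbT/allPn: Hall => [z zC Nz].
have zn : index z C < n by rewrite -Hn index_mem.
have Nz' : ~~ Nv e v C (index z C) by rewrite /Nv /posn modn_small ?nth_index // Hn.
case: (ltngtP (index y1 C) (index y2 C)) => h.
- exact: (core e_sym e_irr Hcyc vC Hmin Hn HC' h i2n N1 N2 zn Nz').
- exact: (core e_sym e_irr Hcyc vC Hmin Hn HC' h i1n N2 N1 zn Nz').
- by rewrite h eqxx in i12.
Qed.
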